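(* Assume $0\le P_F(j)<P_D(j)\le1$. Then $\frac{\partial^2}{\partial P_j^2}J(P_1,\dots,P_K)\le0$ for all $P_j\ge0$ (and all $P_i\ge 0$, $i\ne j$) if and only if $$\frac34-\frac12P_F(j)-\frac14\sqrt{1+12P_F(j)-12P_F(j)^2}\ \le\ P_D(j)\ \le\ \frac34-\frac12P_F(j)+\frac14\sqrt{1+12P_F(j)-12P_F(j)^2}.$$
   Context: Fix $K\ge1$, $\sigma^2>0$, and for $j=1,\dots,K$ channel gains $g_j>0$ and local probabilities $P_D(j),P_F(j)\in[0,1]$. Define $\alpha_F(j)=P_F(j)(1-P_D(j))+P_D(j)(P_D(j)-P_F(j))$, $\alpha_D(j)=P_D(j)(1-P_F(j))-P_F(j)(P_D(j)-P_F(j))$, $\beta_F(j)=P_D(j)(1-P_D(j))$, $\beta_D(j)=P_F(j)(1-P_F(j))$, and for $P_1,\dots,P_K\ge0$ $$J(P_1,\dots,P_K)=\sum_{j=1}^K\left[\frac{\sigma^2+\alpha_F(j)g_jP_j}{\sigma^2+\beta_F(j)g_jP_j}+\frac{\sigma^2+\alpha_D(j)g_jP_j}{\sigma^2+\beta_D(j)g_jP_j}\right].$$ *)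

(* Defs.v *)
From Stdlib Require Import Reals List.
From Coquelicot Require Import Coquelicot.
Open Scope R_scope.

Definition alphaF (PD PF : R) : R := PF * (1 - PD) + PD * (PD - PF).
Definition alphaD (PD PF : R) : R := PD * (1 - PF) - PF * (PD - PF).
Definition betaF (PD PF : R) : R := PD * (1 - PD).
Definition betaD (PD PF : R) : R := PF * (1 - PF).

Definition Jterm (sigma2 g PD PF p : R) : R :=
  (sigma2 + alphaF PD PF * g * p) / (sigma2 + betaF PD PF * g * p)
  + (sigma2 + alphaD PD PF * g * p) / (sigma2 + betaD PD PF * g * p).

(* J(P_1,...,P_K), channels indexed 0..K-1. *)
Definition J (K : nat) (sigma2 : R) (g PD PF P : nat -> R) : R :=
  fold_right Rplus 0
    (map (fun j => Jterm sigma2 (g j) (PD j) (PF j) (P j)) (seq 0 K)).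

Definition upd (P : nat -> R) (j : nat) (x : R) : nat -> R :=
  fun i => if Nat.eqb i j then x else P i.

(* Main.v *)
Require Import Defs.
From Stdlib Require Import Reals List.
From Coquelicot Require Import Coquelicot.
From Stdlib Require Import Lra Psatz Lia.
Open Scope R_scope.

Definition T1 s G a b a' b' x :=
  G*s*(a-b)/(s+b*G*x)^2 + G*s*(a'-b')/(s+b'*G*x)^2.
Definition T2 s G a b a' b' x :=
  2*s*G^2*(b*(b-a))/(s+b*G*x)^3 + 2*s*G^2*(b'*(b'-a'))/(s+b'*G*x)^3.

Lemma deriv2 (s G a b a' b' c x0 : R) :
  0 < s -> 0 <= b*G -> 0 <= b'*G -> 0 <= x0 ->
  Derive_n (fun x => c + ((s + a*G*x)/(s+b*G*x) + (s + a'*G*x)/(s+b'*G*x))) 2 x0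
  = T2 s G a b a' b' x0.
Proof.
  intros Hs Hb Hb' Hx.
  simpl.
  set (M := 1 + b*G + b'*G).
  assert (HM : 0 < M) by (unfold M; lra).
  assert (He : 0 < s / M) by (apply Rdiv_lt_0_compat; lra).
  assert (Hbe : b*G*(s/M) < s).
  { assert (s/M*M = s) by (field; lra). assert (b*G < M) by (unfold M; lra). nra. }
  assert (Hbe' : b'*G*(s/M) < s).
  { assert (s/M*M = s) by (field; lra). assert (b'*G < M) by (unfold M; lra). nra. }
  rewrite (Derive_ext_loc _ (T1 s G a b a' b')).
  - apply is_derive_unique. unfold T1, T2.
    assert (0 < s + b*G*x0) by nra. assert (0 < s + b'*G*x0) by nra.
    auto_derive.
    all: try (repeat split; intro Hc; nra).
    all: try (field; lra).
    all: idtac.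
  - unfold locally. refine (ex_intro _ (mkposreal (s/M) He) _). intros y Hy.
    unfold ball in Hy; simpl in Hy; unfold AbsRing_ball, abs, minus, plus, opp in Hy; simpl in Hy.
    apply Rabs_def2 in Hy. destruct Hy as [Hy1 Hy2].
    assert (H1 : 0 < s + b*G*y).
    { assert (b*G*(x0 - s/M) <= b*G*y) by (apply Rmult_le_compat_l; lra). nra. }
    assert (H2 : 0 < s + b'*G*y).
    { assert (b'*G*(x0 - s/M) <= b'*G*y) by (apply Rmult_le_compat_l; lra). nra. }
    apply is_derive_unique. unfold T1.
    auto_derive.
    all: try (repeat split; intro Hc; nra).
    all: try (field; lra).
    all: idtac.
Qed.

Section Dec.
Variables (sigma2 : R) (g PD PF P : nat -> R) (j : nat).
Definition Sf st n x := fold_right Rplus 0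
    (map (fun i => Jterm sigma2 (g i) (PD i) (PF i) (upd P j x i)) (seq st n)).
Lemma Snot : forall n st x y, (j < st \/ st + n <= j)%nat -> Sf st n x = Sf st n y.
Proof.
  unfold Sf. induction n; intros st x y H; simpl; auto.
  f_equal.
  - unfold upd. destruct (Nat.eqb_spec st j); [lia | reflexivity].
  - apply IHn; lia.
Qed.
Lemma Sin : forall n st x y, (st <= j < st + n)%nat ->
  Sf st n x - Sf st n y = Jterm sigma2 (g j) (PD j) (PF j) x - Jterm sigma2 (g j) (PD j) (PF j) y.
Proof.
  induction n; intros st x y H; [lia|].
  pose proof (Snot n (S st) x y) as HS. pose proof (IHn (S st) x y) as HI.
  unfold Sf in *. simpl.
  destruct (Nat.eq_dec st j).
  - subst. rewrite HS by lia. unfold upd. rewrite Nat.eqb_refl. ring.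
  - unfold upd at 1 3. destruct (Nat.eqb_spec st j); [lia|].
    rewrite <- HI by lia. unfold upd. ring.
Qed.
End Dec.

Definition Qf D F := 2*D^2+2*D*F+2*F^2-3*D-3*F+1.

Lemma cond_iff D F : 0 <= F <= 1 ->
  (3/4 - 1/2 * F - 1/4 * sqrt (1 + 12 * F - 12 * F ^ 2) <= D /\
    D <= 3/4 - 1/2 * F + 1/4 * sqrt (1 + 12 * F - 12 * F ^ 2)) <-> Qf D F <= 0.
Proof.
  intros HF.
  assert (Hd : 0 <= 1 + 12 * F - 12 * F ^ 2) by nra.
  pose proof (sqrt_sqrt _ Hd) as Hr. pose proof (sqrt_pos (1 + 12 * F - 12 * F ^ 2)) as Hr0.
  set (r := sqrt (1 + 12 * F - 12 * F ^ 2)) in *.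
  assert (HQ : 8 * Qf D F = (4*D-3+2*F)^2 - r*r) by (rewrite Hr; unfold Qf; ring).
  split.
  - intros [H1 H2]. nra.
  - intros H. split; nra.
Qed.

Lemma sign_lem A B d1 d2 : 0 < d1 -> 0 < d2 -> A + B <= 0 ->
  ((0 <= A /\ B <= 0 /\ d2 <= d1) \/ (A <= 0 /\ B <= 0) \/ (A <= 0 /\ 0 <= B /\ d1 <= d2)) ->
  A/d1^3 + B/d2^3 <= 0.
Proof.
  intros H1 H2 HAB [[HA [HB Hd]]|[[HA HB]|[HA [HB Hd]]]].
  - assert (/ d1^3 <= / d2^3).
    { apply Rinv_le_contravar. apply pow_lt; lra. apply pow_incr; lra. }
    assert (A/d1^3 <= A/d2^3) by (unfold Rdiv; apply Rmult_le_compat_l; lra).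
    assert ((A+B)/d2^3 <= 0).
    { unfold Rdiv. assert (0 < / d2^3) by (apply Rinv_0_lt_compat, pow_lt; lra). nra. }
    assert ((A+B)/d2^3 = A/d2^3 + B/d2^3) by (field; lra). lra.
  - assert (0 < / d2^3) by (apply Rinv_0_lt_compat, pow_lt; lra).
    assert (0 < / d1^3) by (apply Rinv_0_lt_compat, pow_lt; lra).
    unfold Rdiv. nra.
  - assert (/ d2^3 <= / d1^3).
    { apply Rinv_le_contravar. apply pow_lt; lra. apply pow_incr; lra. }
    assert (B/d2^3 <= B/d1^3) by (unfold Rdiv; apply Rmult_le_compat_l; lra).
    assert ((A+B)/d1^3 <= 0).
    { unfold Rdiv. assert (0 < / d1^3) by (apply Rinv_0_lt_compat, pow_lt; lra). nra. }
    assert ((A+B)/d1^3 = A/d1^3 + B/d1^3) by (field; lra). lra.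
Qed.

Lemma T2_fact s G D F x : 0 < s -> 0 < s + betaF D F*G*x -> 0 < s + betaD D F*G*x ->
  T2 s G (alphaF D F) (betaF D F) (alphaD D F) (betaD D F) x =
  2*s*G^2*(D-F) * (D*(1-D)*(1-2*D)/(s + betaF D F*G*x)^3 + (- (F*(1-F)*(1-2*F)))/(s + betaD D F*G*x)^3).
Proof.
  intros. unfold T2, alphaF, alphaD, betaF, betaD in *. field. split; lra.
Qed.

Lemma T2_neg s G D F x : 0 < s -> 0 < G -> 0 <= x -> 0 <= F -> F < D -> D <= 1 -> Qf D F <= 0 ->
  T2 s G (alphaF D F) (betaF D F) (alphaD D F) (betaD D F) x <= 0.
Proof.
  intros Hs HG Hx HF HFD HD HQ.
  assert (HbF : 0 <= betaF D F * G) by (unfold betaF; apply Rmult_le_pos; [nra|lra]).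
  assert (HbD : 0 <= betaD D F * G) by (unfold betaD; apply Rmult_le_pos; [nra|lra]).
  assert (0 < s + betaF D F*G*x) by nra.
  assert (0 < s + betaD D F*G*x) by nra.
  rewrite T2_fact by lra.
  assert (0 <= 2*s*G^2*(D-F)) by (assert (0 < G^2) by (apply pow_lt; lra); apply Rmult_le_pos; [|lra]; apply Rmult_le_pos; lra).
  assert (D*(1-D)*(1-2*D)/(s + betaF D F*G*x)^3 + (- (F*(1-F)*(1-2*F)))/(s + betaD D F*G*x)^3 <= 0).
  { assert (HD0 : 0 < D) by lra.
    apply sign_lem; try lra.
    - unfold Qf in HQ.
      assert (D*(1-D)*(1-2*D) + - (F*(1-F)*(1-2*F)) = (D-F)*Qf D F) by (unfold Qf; ring).
      unfold Qf in *. assert (0 <= (D-F) * -(2*D^2+2*D*F+2*F^2-3*D-3*F+1)) by (apply Rmult_le_pos; lra). lra.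
    - unfold betaF, betaD.
      assert (Hdiff : D*(1-D) - F*(1-F) = (D-F)*(1-D-F)) by ring.
      destruct (Rle_lt_dec D (1/2)).
      + left. split; [repeat apply Rmult_le_pos; lra|]. split.
        { assert (0 <= F*(1-F)*(1-2*F)) by (repeat apply Rmult_le_pos; lra). lra. }
        assert (0 <= (D-F)*(1-D-F)*G*x).
        { repeat apply Rmult_le_pos; lra. }
        assert (D*(1-D)*G*x - F*(1-F)*G*x = (D-F)*(1-D-F)*G*x) by ring. lra.
      + assert (D*(1-D)*(1-2*D) <= 0).
        { assert (0 <= D*(1-D)*(2*D-1)) by (repeat apply Rmult_le_pos; lra). lra. }
        destruct (Rle_lt_dec F (1/2)).
        * right; left. split; [lra|].
          assert (0 <= F*(1-F)*(1-2*F)) by (repeat apply Rmult_le_pos; lra). lra.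
        * right; right. split; [lra|]. split.
          { assert (0 <= F*(1-F)*(2*F-1)) by (repeat apply Rmult_le_pos; lra). lra. }
          assert (0 <= (D-F)*(D+F-1)*G*x).
          { repeat apply Rmult_le_pos; lra. }
          assert (D*(1-D)*G*x - F*(1-F)*G*x = -((D-F)*(D+F-1)*G*x)) by ring. lra. }
  set (K1 := 2*s*G^2*(D-F)) in *.
  set (K2 := D * (1 - D) * (1 - 2 * D) / (s + betaF D F * G * x) ^ 3 +
   - (F * (1 - F) * (1 - 2 * F)) / (s + betaD D F * G * x) ^ 3) in *.
  assert (0 <= K1 * - K2) by (apply Rmult_le_pos; lra).
  nra.
Qed.

Lemma T2_zero_neg s G D F : 0 < s -> 0 < G -> F < D ->
  T2 s G (alphaF D F) (betaF D F) (alphaD D F) (betaD D F) 0 <= 0 -> Qf D F <= 0.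
Proof.
  intros Hs HG HFD H.
  assert (E : T2 s G (alphaF D F) (betaF D F) (alphaD D F) (betaD D F) 0 =
     (2*G^2*(D-F)^2/s^2) * Qf D F).
  { unfold T2, alphaF, alphaD, betaF, betaD, Qf. field. lra. }
  rewrite E in H.
  assert (0 < 2*G^2*(D-F)^2/s^2).
  { unfold Rdiv. apply Rmult_lt_0_compat.
    - assert (0 < G^2) by (apply pow_lt; lra). assert (0 < (D-F)^2) by (apply pow_lt; lra). nra.
    - apply Rinv_0_lt_compat, pow_lt; lra. }
  nra.
Qed.

Theorem lemma3 (K : nat) (sigma2 : R) (g PD PF : nat -> R) (j : nat) :
  (1 <= K)%nat -> 0 < sigma2 ->
  (forall i, (i < K)%nat -> 0 < g i) ->
  (forall i, (i < K)%nat -> 0 <= PD i <= 1 /\ 0 <= PF i <= 1) ->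
  (j < K)%nat ->
  0 <= PF j -> PF j < PD j -> PD j <= 1 ->
  ((forall P : nat -> R, (forall i, (i < K)%nat -> 0 <= P i) ->
      Derive_n (fun x => J K sigma2 g PD PF (upd P j x)) 2 (P j) <= 0)
   <->
   (3/4 - 1/2 * PF j - 1/4 * sqrt (1 + 12 * PF j - 12 * PF j ^ 2) <= PD j /\
    PD j <= 3/4 - 1/2 * PF j + 1/4 * sqrt (1 + 12 * PF j - 12 * PF j ^ 2))).
Proof.
  intros HK Hs Hg Hr Hj HF HFD HD.
  assert (HG : 0 < g j) by auto.
  assert (Hder : forall P, 0 <= P j ->
     Derive_n (fun x => J K sigma2 g PD PF (upd P j x)) 2 (P j) =
     T2 sigma2 (g j) (alphaF (PD j) (PF j)) (betaF (PD j) (PF j))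
        (alphaD (PD j) (PF j)) (betaD (PD j) (PF j)) (P j)).
  { intros P HP.
    rewrite (Derive_n_ext _ (fun x => (J K sigma2 g PD PF (upd P j 0) - Jterm sigma2 (g j) (PD j) (PF j) 0)
                + Jterm sigma2 (g j) (PD j) (PF j) x)).
    - unfold Jterm. apply deriv2; try lra.
      + unfold betaF. apply Rmult_le_pos; [nra|lra].
      + unfold betaD. apply Rmult_le_pos; [nra|lra].
    - intros t. pose proof (Sin sigma2 g PD PF P j K 0 t 0) as H.
      specialize (H ltac:(lia)). unfold Sf in H. unfold J. lra. }
  destruct (Hr j Hj) as [_ HF1].
  rewrite (cond_iff (PD j) (PF j)) by lra.
  split.
  - intros H. apply (T2_zero_neg sigma2 (g j)); try lra.
    specialize (H (fun _ => 0) (fun _ _ => Rle_refl 0)).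
    pose proof (Hder (fun _ => 0) (Rle_refl 0)) as E. simpl in E, H. rewrite E in H. exact H.
  - intros HQ P HP. rewrite Hder by auto.
    apply T2_neg; auto; lra.
Qed.
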